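(* Let $a<b$ be real numbers and let $f$ be a real function differentiable on $[a,b]$ (one-sided derivatives at the endpoints) such that $f(a)=f(b)$ and $a,b$ are $f$-separated. Then there exists $z\in\,]a,b[$ such that $f'(z)=0$ and the points $a,z,b$ are $f'$-separated, i.e. $f'$ is non-constant on $[a,z]$ and $f'$ is non-constant on $[z,b]$.
   Context: For a real function $f$ and real numbers $a<b$, the points $a,b$ are called $f$-separated if $f$ is defined on $[a,b]$ and non-constant there, i.e. there is $c\in[a,b]$ with $f(c)\neq f(a)$. A strictly increasing family of points $a_0<a_1<\dots$ is $f$-separated if every two consecutive points of it are $f$-separated. *)

(* Defs.v *)
From Stdlib Require Import Reals Lra.
Open Scope R_scope.

(* a, b are f-separated: a < b and f is non-constant on [a,b]
   (f is a total function, so "defined on [a,b]" is automatic). *)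
Definition f_separated (f : R -> R) (a b : R) : Prop :=
  a < b /\ exists c, a <= c <= b /\ f c <> f a.

(* [l] is the derivative of [f] at [x] relative to the set [D]
   (limit of difference quotients for y -> x, y in D, y <> x).
   For D = [a,b] this gives one-sided derivatives at the endpoints. *)
Definition is_deriv_within (D : R -> Prop) (f : R -> R) (x l : R) : Prop :=
  limit1_in (fun y => (f y - f x) / (y - x)) (fun y => D y /\ y <> x) l x.

(* Main.v *)
Require Import Defs.
From Stdlib Require Import Reals.
From Stdlib Require Import Lra.
Open Scope R_scope.

Definition clamp (a b x : R) := Rmax a (Rmin b x).

Lemma clamp_id a b x : a <= x <= b -> clamp a b x = x.
Proof. intros. unfold clamp, Rmax, Rmin. repeat destruct Rle_dec; lra. Qed.

Lemma clamp_in a b x : a <= b -> a <= clamp a b x <= b.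
Proof. intros. unfold clamp, Rmax, Rmin. repeat destruct Rle_dec; lra. Qed.

Lemma clamp_lip a b x y : a <= b -> a <= x <= b -> Rabs (clamp a b y - x) <= Rabs (y - x).
Proof. intros. unfold clamp, Rmax, Rmin.
  repeat destruct Rle_dec; unfold Rabs; repeat destruct Rcase_abs; lra. Qed.

Lemma unf_deriv D f x l : is_deriv_within D f x l ->
  forall eps, eps > 0 -> exists d, d > 0 /\ forall y, D y -> y <> x -> Rabs (y - x) < d ->
   Rabs ((f y - f x) / (y - x) - l) < eps.
Proof.
  intros H eps He. destruct (H eps He) as [d [Hd Hy]]. exists d; split; auto.
  intros y Dy Ny Ay. apply (Hy y). split; auto.
Qed.

Lemma cont_within D f x l : is_deriv_within D f x l ->
  forall eps, eps > 0 -> exists d, d > 0 /\ forall y, D y -> Rabs (y - x) < d ->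
   Rabs (f y - f x) < eps.
Proof.
  intros H eps He. destruct (unf_deriv D f x l H 1 ltac:(lra)) as [d [Hd Hy]].
  assert (Hl : 0 < Rabs l + 1) by (pose proof (Rabs_pos l); lra).
  exists (Rmin d (eps / (Rabs l + 1))). split.
  { apply Rmin_pos; auto. apply Rdiv_lt_0_compat; lra. }
  intros y Dy Ay.
  destruct (Req_dec y x) as [->|Ny].
  { replace (f x - f x) with 0 by ring. rewrite Rabs_R0. lra. }
  assert (A1 : Rabs (y - x) < d) by (eapply Rlt_le_trans; [exact Ay| apply Rmin_l]).
  assert (A2 : Rabs (y - x) < eps / (Rabs l + 1)) by (eapply Rlt_le_trans; [exact Ay| apply Rmin_r]).
  specialize (Hy y Dy Ny A1).
  assert (Hne : y - x <> 0) by lra.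
  assert (Hq : Rabs ((f y - f x) / (y - x)) <= Rabs l + 1).
  { replace ((f y - f x) / (y - x)) with (((f y - f x) / (y - x) - l) + l) by ring.
    eapply Rle_trans; [apply Rabs_triang|]. lra. }
  replace (f y - f x) with ((f y - f x) / (y - x) * (y - x)) by (field; auto).
  rewrite Rabs_mult.
  assert (0 <= Rabs (y - x)) by apply Rabs_pos.
  apply Rle_lt_trans with ((Rabs l + 1) * Rabs (y - x)).
  { apply Rmult_le_compat_r; auto. }
  apply (Rmult_lt_compat_l (Rabs l + 1)) in A2; auto.
  replace ((Rabs l + 1) * (eps / (Rabs l + 1))) with eps in A2 by (field; lra). lra.
Qed.

Lemma g_cont a b f f' x : a < b ->
  (forall x, a <= x <= b -> is_deriv_within (fun y => a <= y <= b) f x (f' x)) ->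
  a <= x <= b -> continuity_pt (fun y => f (clamp a b y)) x.
Proof.
  intros Hab Hd Hx. unfold continuity_pt, continue_in, limit1_in, limit_in.
  intros eps He. simpl. unfold R_dist.
  destruct (cont_within _ _ _ _ (Hd x Hx) eps He) as [d [Hd0 Hy]].
  exists d. split; auto. intros y [_ Ay].
  rewrite (clamp_id a b x Hx). apply Hy.
  - apply clamp_in; lra.
  - eapply Rle_lt_trans; [apply clamp_lip; lra | exact Ay].
Qed.

Lemma g_deriv a b f f' x : a < b ->
  (forall x, a <= x <= b -> is_deriv_within (fun y => a <= y <= b) f x (f' x)) ->
  a < x < b -> derivable_pt_lim (fun y => f (clamp a b y)) x (f' x).
Proof.
  intros Hab Hd Hx eps He.
  destruct (unf_deriv _ _ _ _ (Hd x ltac:(lra)) eps He) as [d [Hd0 Hy]].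
  assert (P : 0 < Rmin d (Rmin (x - a) (b - x))).
  { apply Rmin_pos; auto. apply Rmin_pos; lra. }
  exists (mkposreal _ P). intros h Hh Ah. simpl in Ah.
  assert (A1 : Rabs h < d) by (eapply Rlt_le_trans; [exact Ah| apply Rmin_l]).
  assert (A2 : Rabs h < Rmin (x - a) (b - x)) by (eapply Rlt_le_trans; [exact Ah| apply Rmin_r]).
  assert (A3 : Rabs h < x - a) by (eapply Rlt_le_trans; [exact A2| apply Rmin_l]).
  assert (A4 : Rabs h < b - x) by (eapply Rlt_le_trans; [exact A2| apply Rmin_r]).
  assert (Hxh : a <= x + h <= b) by (unfold Rabs in *; destruct Rcase_abs; lra).
  rewrite (clamp_id a b (x + h) Hxh), (clamp_id a b x ltac:(lra)).
  specialize (Hy (x + h) Hxh ltac:(lra)).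
  replace (x + h - x) with h in Hy by ring. apply Hy. lra.
Qed.

Theorem mainTheorem1 (a b : R) (f f' : R -> R) :
  a < b ->
  (forall x, a <= x <= b -> is_deriv_within (fun y => a <= y <= b) f x (f' x)) ->
  f a = f b ->
  f_separated f a b ->
  exists z, a < z < b /\ f' z = 0 /\ f_separated f' a z /\ f_separated f' z b.
Proof.
  intros Hab Hd Hfab [_ [c [Hc Hfc]]].
  set (g := fun y => f (clamp a b y)).
  assert (Hg : forall y, a <= y <= b -> g y = f y) by (intros; unfold g; rewrite clamp_id; auto).
  assert (Hgc : forall y, a <= y <= b -> continuity_pt g y) by (intros; apply (g_cont a b f f'); auto).
  assert (Hgd : forall y, a < y < b -> derivable_pt_lim g y (f' y)) by (intros; apply g_deriv; auto).
  assert (Hconst : forall u v, a <= u -> u < v -> v <= b ->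
            (forall x, u <= x <= v -> f' x = 0) -> f v = f u).
  { intros u v Hu Huv Hv H0.
    pose (pr := fun x (P : u < x < v) =>
        exist (fun l => derivable_pt_abs g x l) (f' x) (Hgd x ltac:(lra))).
    pose proof (null_derivative_loc g u v pr) as N.
    assert (N' : constant_D_eq g (fun x => u <= x <= v) (g u)).
    { apply N.
      - intros; apply Hgc; lra.
      - intros x P. simpl. apply H0; lra. }
    rewrite <- (Hg v), <- (Hg u) by lra. apply N'. lra. }
  assert (Key : forall z, a < z < b -> f' z = 0 -> f z <> f a ->
     exists z, a < z < b /\ f' z = 0 /\ f_separated f' a z /\ f_separated f' z b).
  { intros z Hz Hz0 Hfz. exists z. split; auto. split; auto. split.
    - split; [lra|]. apply Classical_Prop.NNPP. intro Hn.
      apply Hfz. apply Hconst; try lra. intros x Hx.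
      destruct (Classical_Prop.classic (f' x = f' a)) as [E|E].
      + rewrite E. destruct (Classical_Prop.classic (f' z = f' a)) as [E2|E2].
        * congruence.
        * exfalso; apply Hn; exists z; split; [lra|auto].
      + exfalso; apply Hn; exists x; split; auto.
    - split; [lra|]. apply Classical_Prop.NNPP. intro Hn.
      apply Hfz. rewrite Hfab. symmetry. apply Hconst; try lra. intros x Hx.
      destruct (Classical_Prop.classic (f' x = f' z)) as [E|E].
      + congruence.
      + exfalso; apply Hn; exists x; split; auto. }
  destruct (Rle_lt_dec (f c) (f a)) as [Hlt|Hgt].
  - assert (Hlt' : f c < f a) by lra.
    destruct (continuity_ab_min g a b ltac:(lra) Hgc) as [m [Hm Hmab]].
    assert (Hgm : g m <= f c) by (rewrite <- (Hg c) by lra; apply Hm; lra).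
    assert (Hma : m <> a) by (intro; subst; rewrite Hg in Hgm; lra).
    assert (Hmb : m <> b) by (intro; subst; rewrite Hg in Hgm; lra).
    assert (Hm' : a < m < b) by lra.
    apply (Key m Hm').
    + assert (pr : derivable_pt g m) by (exists (f' m); apply Hgd; auto).
      pose proof (deriv_minimum g a b m (exist _ (f' m) (Hgd m Hm')) ltac:(lra) ltac:(lra)) as DM.
      simpl in DM. apply DM. intros; apply Hm; lra.
    + rewrite Hg in Hgm; lra.
  - destruct (continuity_ab_maj g a b ltac:(lra) Hgc) as [m [Hm Hmab]].
    assert (Hgm : f c <= g m) by (rewrite <- (Hg c) by lra; apply Hm; lra).
    assert (Hma : m <> a) by (intro; subst; rewrite Hg in Hgm; lra).
    assert (Hmb : m <> b) by (intro; subst; rewrite Hg in Hgm; lra).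
    assert (Hm' : a < m < b) by lra.
    apply (Key m Hm').
    + pose proof (deriv_maximum g a b m (exist _ (f' m) (Hgd m Hm')) ltac:(lra) ltac:(lra)) as DM.
      simpl in DM. apply DM. intros; apply Hm; lra.
    + rewrite Hg in Hgm; lra.
Qed.
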